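(* Let $n,t\in\mathbb{N}$. Let $F$ be a $2$-regular graph on $n$ vertices all of whose cycles have length at least $30$. Let $n_1,\dots,n_t\in\mathbb{N}$ with $\sum_{i\in[t]}n_i=n$ and $n_i\ge50$ for all $i$. Then there exists $f:V(F)\to[t]$ such that (i) $|f^{-1}(i)|=n_i$ for all $i\in[t]$; (ii) $|f(x)-f(y)|\le1$ for all $xy\in E(F)$; (iii) the set $E$ of edges $xy\in E(F)$ with $f(x)\ne f(y)$ is an induced matching in $F$; (iv) for every $i\in[t-1]$ there are exactly four edges $xy\in E(F)$ with $\{f(x),f(y)\}=\{i,i+1\}$. *)

(* Defs.v *)
From HB Require Import structures.
From mathcomp Require Import all_boot all_order.
Set Implicit Arguments. Unset Strict Implicit. Unset Printing Implicit Defensive.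

Definition simple_graph (T : finType) (e : rel T) : Prop :=
  symmetric e /\ irreflexive e.

Definition two_regular (T : finType) (e : rel T) : Prop :=
  forall x : T, #|[set y | e x y]| = 2.

Definition cycles_at_least (T : finType) (k : nat) (e : rel T) : Prop :=
  forall c : seq T, uniq c -> cycle e c -> 3 <= size c -> k <= size c.

Definition edges (T : finType) (e : rel T) : {set {set T}} :=
  [set A : {set T} | [exists x : T, exists y : T, (A == [set x; y]) && e x y]].

Definition induced_matching (T : finType) (e : rel T) (E : {set {set T}}) : Prop :=
  E \subset edges e /\
  forall A B : {set T}, A \in E -> B \in E -> A != B ->
    forall a b : T, a \in A -> b \in B -> a != b /\ ~~ e a b.

Definition cross_edges (T : finType) (t : nat) (e : rel T) (f : T -> 'I_t)
  : {set {set T}} :=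
  [set A : {set T} | [exists x : T, exists y : T,
     [&& A == [set x; y], e x y & f x != f y]]].

(* Edges xy with {f x, f y} = {i, i+1} (0-based labels). *)
Definition edges_between (T : finType) (t : nat) (e : rel T) (f : T -> 'I_t)
  (i : nat) : {set {set T}} :=
  [set A : {set T} | [exists x : T, exists y : T,
     [&& A == [set x; y], e x y &
         (((val (f x) == i) && (val (f y) == i.+1))
          || ((val (f y) == i) && (val (f x) == i.+1)))]]].

(* Main.v *)
Require Import Defs.
From HB Require Import structures.
From mathcomp Require Import all_boot all_order zify.
Set Implicit Arguments. Unset Strict Implicit.

Lemma no3 (T : finType) (e : rel T) (Hreg : two_regular e) u a b c :
  e u a -> e u b -> e u c -> a != b -> a != c -> b != c -> False.
Proof.
move=> ua ub uc ab ac bc.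
have : #|[set a; b; c]| <= #|[set y | e u y]|.
  apply: subset_leq_card; apply/subsetP => y; rewrite !inE.
  by move=> /orP [/orP [] | ] /eqP ->.
rewrite Hreg. set A := [set a; b; c].
have -> : A = a |: [set b; c] by rewrite /A setUA.
by rewrite cardsU1 cards2 !inE bc negb_or ab ac.
Qed.

Lemma nbr2 (T : finType) (e : rel T) (Hreg : two_regular e) u a b v :
  e u a -> e u b -> a != b -> e u v -> v = a \/ v = b.
Proof.
move=> ua ub ab uv.
case: (eqVneq v a) => [-> | va]; first by left.
case: (eqVneq v b) => [-> | vb]; first by right.
by case: (no3 Hreg ua ub uv ab); rewrite eq_sym.
Qed.

Lemma other_nbr (T : finType) (e : rel T) (Hreg : two_regular e) u w :
  exists z, e u z /\ z != w.
Proof.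
have h := cardsD1 w [set y | e u y]; rewrite Hreg in h.
have : 0 < #|[set y | e u y] :\ w|.
  by case: (w \in _) h => /= h; [rewrite add1n in h; case: h => <- | rewrite add0n in h; rewrite -h].
case/card_gt0P => z; rewrite !inE => /andP [zw uz]; by exists z.
Qed.

Lemma maxpath (T : finType) (e : rel T) k : forall x p,
  #|T| - size p <= k -> uniq (x :: p) -> path e x p ->
  exists q, [/\ uniq (x :: p ++ q), path e x (p ++ q) &
                forall z, e (last x (p ++ q)) z -> z \in x :: p ++ q].
Proof.
elim: k => [|k IH] x p Hk Hu Hp;
  (case: (boolP [exists z, e (last x p) z && (z \notin x :: p)]) => [/existsP [z /andP [lz zn]] | Hn];
   last by exists [::]; rewrite cats0; split => // z lz; apply/negPn/negP => zn;
           move/existsP: Hn; apply; exists z; rewrite lz zn).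
- have : uniq (z :: x :: p) by rewrite cons_uniq zn Hu.
  move/card_uniqP => /= H; have := max_card [predU1 z & x :: p].
  have -> : #|[predU1 z & x :: p]| = #|z :: x :: p|.
    by apply: eq_card => w; rewrite !inE.
  rewrite H /= ltnNge => /negP; case; apply: (leq_trans _ (leqnSn _)); by rewrite -subn_eq0 -leqn0.
- have h1 : #|T| - size (rcons p z) <= k by rewrite size_rcons; lia.
  have h2 : uniq (x :: rcons p z).
    by rewrite -rcons_cons rcons_uniq zn Hu.
  have h3 : path e x (rcons p z) by rewrite rcons_path Hp lz.
  have [q [q1 q2 q3]] := IH x (rcons p z) h1 h2 h3.
  exists (z :: q); rewrite -cats1 -catA /= in q1 q2 q3; by split.
Qed.

Lemma ar1 j m : j < m.+1 -> j != m -> j != m.-1 -> 0 < m -> 0 < j ->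
  [/\ j.-1 < m, j < m, j.-1 < m.+1, j.+1 < m.+1 & [&& j.-1 != j.+1, j.-1 != m & j.+1 != m]].
Proof. move=> h1 h2 h3 h4 h5; split; try lia; rewrite -!(rwP eqP) -!(rwP andP); lia. Qed.
Lemma ar2 m : 0 != m.-1 -> 0 < m -> 3 <= m.+1.
Proof. lia. Qed.

Lemma cyc_through (T : finType) (e : rel T) (Hsym : symmetric e) (Hirr : irreflexive e)
  (Hreg : two_regular e) x : exists c, [/\ uniq c, cycle e c, 3 <= size c & x \in c].
Proof.
have [y [xy _]] := other_nbr Hreg x x.
have yx : y != x by apply/eqP => E; rewrite E Hirr in xy.
have [|||q [q1 q2 q3]] := @maxpath T e #|T| x [:: y].
- exact: leq_subr.
- by rewrite /= inE eq_sym yx.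
- by rewrite /= xy.
rewrite cat1s in q1 q2 q3.
set r := y :: q in q1 q2 q3.
set m := size r.
set c := x :: r.
have Hn : forall i, i < m -> e (nth x c i) (nth x c i.+1).
  by move=> i im; have H := elimT (pathP x) q2; exact: H.
have m1 : 0 < m by [].
have lu : last x r = nth x c m by rewrite (last_nth x).
have [z [uz zp]] := other_nbr Hreg (last x r) (nth x c m.-1).
have zc : z \in c := q3 z uz.
have jlt : index z c < m.+1 by rewrite -[m.+1]/(size c) index_mem.
have zj : nth x c (index z c) = z by rewrite nth_index.
set j := index z c in jlt zj.
have jm : j != m.
  by apply/eqP => E; move: uz; rewrite lu -E zj Hirr.
have jm1 : j != m.-1 by apply/eqP => E; move: zp; rewrite -zj E eqxx.
have cu : uniq c := q1.
have neq : forall a b, a < m.+1 -> b < m.+1 -> a != b -> nth x c a != nth x c b.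
  by move=> a b am bm ab; rewrite nth_uniq.
have j0 : j = 0.
  case: (posnP j) => // jpos; exfalso.
  have [h1 h2 h3 h4 /and3P [h5 h6 h7]] := ar1 jlt jm jm1 m1 jpos.
  have e1 : e z (nth x c j.-1) by rewrite -zj Hsym -{2}(prednK jpos); apply: Hn.
  have e2 : e z (nth x c j.+1) by rewrite -zj; apply: Hn.
  have e3 : e z (nth x c m) by rewrite -lu Hsym.
  by apply: (no3 Hreg e1 e2 e3); apply: neq.
have zx : z = x by rewrite -zj j0.
exists c; split => //.
- rewrite /c /= rcons_path; move: q2 uz; rewrite /r /= zx => /andP [-> ->] ->; done.
- rewrite /c /= -/r -/m; move: jm1 m1; rewrite j0; exact: ar2.
- by rewrite inE eqxx.
Qed.

Definition csucc (L i : nat) := if i.+1 < L then i.+1 else 0.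
Definition cpred (L i : nat) := if i == 0 then L.-1 else i.-1.

Lemma csucc_lt L i : i < L -> csucc L i < L.
Proof. rewrite /csucc; case: ifP => //; lia. Qed.
Lemma cpred_lt L i : i < L -> cpred L i < L.
Proof. rewrite /cpred; case: ifP => _; lia. Qed.
Lemma csucc_pred L i : i < L -> csucc L (cpred L i) = i.
Proof. rewrite /csucc /cpred; case: ifP => /eqP; case: ifP; lia. Qed.

Lemma csucc_neq L i : 3 <= L -> i < L -> (csucc L i == cpred L i) = false.
Proof. rewrite /csucc /cpred => h1 h2; case: ifP => /eqP; case: ifP => h3 h4; apply/eqP; lia. Qed.

Lemma cyc_edge (T : finType) (e : rel T) (c : seq T) x0 i :
  cycle e c -> i < size c -> e (nth x0 c i) (nth x0 c (csucc (size c) i)).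
Proof.
case: c => [|a r] //= Hc il.
have H := elimT (pathP x0) Hc.
have := H i; rewrite size_rcons => /(_ il).
rewrite -rcons_cons !nth_rcons /= /csucc.
move: il; rewrite ltnS leq_eqVlt => /orP [/eqP ->|il].
  by rewrite ltnn eqxx ltnn.
by rewrite il orbT ltnS il.
Qed.

Lemma cyc_adj (T : finType) (e : rel T) (Hsym : symmetric e) (Hreg : two_regular e)
  (c : seq T) x0 i j :
  uniq c -> cycle e c -> 3 <= size c -> i < size c -> j < size c ->
  e (nth x0 c i) (nth x0 c j) = (j == csucc (size c) i) || (i == csucc (size c) j).
Proof.
move=> cu cc c3 il jl.
apply/idP/idP.
- move=> eij.
  have e1 := cyc_edge x0 cc il.
  have e2 : e (nth x0 c i) (nth x0 c (cpred (size c) i)).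
    by rewrite Hsym -{2}(csucc_pred il); apply: cyc_edge => //; apply: cpred_lt.
  have ne : nth x0 c (csucc (size c) i) != nth x0 c (cpred (size c) i).
    by rewrite nth_uniq // ?csucc_neq // ?csucc_lt // ?cpred_lt.
  case: (nbr2 Hreg e1 e2 ne eij) => /eqP.
  + by rewrite nth_uniq // ?csucc_lt // => ->.
  + rewrite nth_uniq // ?cpred_lt // => /eqP ->.
    by rewrite csucc_pred // eqxx orbT.
- case/orP => /eqP ->; first exact: cyc_edge.
  by rewrite Hsym; apply: cyc_edge.
Qed.

Lemma cyc_closed (T : finType) (e : rel T) (Hsym : symmetric e) (Hreg : two_regular e)
  (c : seq T) u v :
  uniq c -> cycle e c -> 3 <= size c -> u \in c -> e u v -> v \in c.
Proof.
move=> cu cc c3 uc uv.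
have il : index u c < size c by rewrite index_mem.
have e1 := cyc_edge u cc il.
have e2 : e (nth u c (index u c)) (nth u c (cpred (size c) (index u c))).
  by rewrite Hsym -{2}(csucc_pred il); apply: cyc_edge => //; apply: cpred_lt.
have ne : nth u c (csucc (size c) (index u c)) != nth u c (cpred (size c) (index u c)).
  by rewrite nth_uniq // ?csucc_neq // ?csucc_lt // ?cpred_lt.
rewrite nth_index // in e1 e2.
case: (nbr2 Hreg e1 e2 ne uv) => ->; apply: mem_nth.
  exact: csucc_lt. exact: cpred_lt.
Qed.

Definition goodc (T : finType) (e : rel T) (c : seq T) :=
  [&& uniq c, cycle e c & 30 <= size c].

Lemma path_closed (T : finType) (e : rel T) (P : pred T) :
  (forall u v, P u -> e u v -> P v) -> forall p a, P a -> path e a p -> all P p.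
Proof.
move=> HP; elim=> [|b p IH] a Pa //= /andP [ab pb].
have Pb := HP _ _ Pa ab. by rewrite Pb (IH b).
Qed.

Lemma cycle_closed (T : finType) (e : rel T) (P : pred T) c y z :
  (forall u v, P u -> e u v -> P v) -> cycle e c -> y \in c -> P y -> z \in c -> P z.
Proof.
move=> HP cc yc Py zc.
case: (rot_to yc) => i s' Hr.
have : cycle e (y :: s') by rewrite -Hr rot_cycle.
rewrite /= rcons_path => /andP [ps _].
have := path_closed HP Py ps => /allP Hall.
have : z \in y :: s' by rewrite -Hr mem_rot.
rewrite inE => /orP [/eqP -> //|]; exact: Hall.
Qed.

Lemma ar3 a b d k : a - d <= k.+1 -> 0 < b -> a - (b + d) <= k.
Proof. lia. Qed.

Lemma decomp (T : finType) (e : rel T) (Hsym : symmetric e) (Hirr : irreflexive e)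
  (Hreg : two_regular e) (Hgirth : cycles_at_least 30 e) :
  exists cs : seq (seq T),
    [/\ uniq (flatten cs), (forall x, x \in flatten cs) & all (goodc e) cs].
Proof.
suff : forall k cs0, #|T| - size (flatten cs0) <= k -> uniq (flatten cs0) ->
   all (goodc e) cs0 ->
   exists cs : seq (seq T),
    [/\ uniq (flatten cs), (forall x, x \in flatten cs) & all (goodc e) cs].
  by move=> H; apply: (H _ [::]).
elim=> [|k IH] cs0 Hk Hu Hg;
  (case: (boolP [exists x, x \notin flatten cs0]) => [/existsP [x xn] | Hn];
   last by exists cs0; split => // x; apply/negPn/negP => xn;
           move/existsP: Hn; apply; exists x).
- have : uniq (x :: flatten cs0) by rewrite cons_uniq xn Hu.
  move/card_uniqP => /= H; have := max_card [predU1 x & flatten cs0].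
  have -> : #|[predU1 x & flatten cs0]| = #|x :: flatten cs0|.
    by apply: eq_card => w; rewrite !inE.
  by rewrite H /= ltnNge => /negP; case; rewrite -subn_eq0 -leqn0.
- have [c [cu cc c3 xc]] := cyc_through Hsym Hirr Hreg x.
  have c30 := Hgirth c cu cc c3.
  have disj : forall y, y \in c -> y \notin flatten cs0.
    move=> y yc; apply/negP => /flattenP [c' c'in yc'].
    have gc' : goodc e c' := allP Hg c' c'in.
    case/and3P: gc' => c'u c'c c'30.
    have cl : forall u v, u \in c' -> e u v -> v \in c'.
      move=> u v uc uv; apply: (cyc_closed Hsym Hreg c'u c'c _ uc uv).
      exact: leq_trans c'30.
    have xc' : x \in c' := cycle_closed cl cc yc yc' xc.
    by move/negP: xn; apply; apply/flattenP; exists c'.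
  apply: (IH (c :: cs0)) => /=.
  + rewrite size_cat; have : 0 < size c by case: (c) xc.
    exact: ar3 Hk.
  + rewrite cat_uniq cu Hu andbT /=; apply/hasPn => y /= yf.
    by apply/negP => yc; move: (disj y yc); rewrite yf.
  + by rewrite Hg andbT /goodc cu cc c30.
Qed.

Definition unf (L q : nat) := if q == 0 then 0 else if odd q then q.+1./2 else L - q./2.

Lemma unf_o L a : unf L a.*2.+1 = a.+1.
Proof. by rewrite /unf /= odd_double /= doubleK. Qed.
Lemma unf_e L a : unf L a.*2 = if a == 0 then 0 else L - a.
Proof. rewrite /unf odd_double doubleK; by case: a. Qed.

Lemma unf_cases L q : exists a, (q = a.*2.+1 /\ unf L q = a.+1) \/ (q = a.*2 /\ unf L q = if a == 0 then 0 else L - a).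
Proof.
elim: q => [|q [a [[-> _]|[-> _]]]]; first by exists 0; right.
  by exists a.+1; right; split; [rewrite doubleS | rewrite -doubleS unf_e].
by exists a; left; rewrite unf_o.
Qed.

Definition cadj L i j := (j == csucc L i) || (i == csucc L j).

Lemma unf_lt L q : 2 <= L -> q < L -> unf L q < L.
Proof.
move=> L2; have [a [[-> ->]|[-> ->]]] := unf_cases L q.
  lia.
case: ifP => [H|/negbT H]; move: H; lia.
Qed.

Lemma unf_inj L p q : 2 <= L -> p < L -> q < L -> unf L p = unf L q -> p = q.
Proof.
move=> L2; have [a [[-> ->]|[-> ->]]] := unf_cases L p;
have [b [[-> ->]|[-> ->]]] := unf_cases L q; repeat case: ifP => [?|/negbT ?]; lia.
Qed.

Lemma unf_adj L p q : 5 <= L -> p < q -> q < L ->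
  cadj L (unf L p) (unf L q) = (q == p.+2) || ((q == p.+1) && ((p == 0) || (q.+1 == L))).
Proof.
move=> L5; rewrite /cadj /csucc.
have [a [[-> ->]|[-> ->]]] := unf_cases L p;
have [b [[-> ->]|[-> ->]]] := unf_cases L q;
(try case: (a =P 0) => [->|?]); (try case: (b =P 0) => [->|?]);
repeat case: ifP => [?|/negbT ?]; rewrite -!muln2 => ? ?; apply/idP/idP; lia.
Qed.

Definition fold (T : Type) (x0 : T) (c : seq T) :=
  [seq nth x0 c (unf (size c) q) | q <- iota 0 (size c)].

Lemma size_fold (T : Type) (x0 : T) c : size (fold x0 c) = size c.
Proof. by rewrite size_map size_iota. Qed.

Lemma nth_fold (T : Type) (x0 : T) c q : q < size c ->
  nth x0 (fold x0 c) q = nth x0 c (unf (size c) q).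
Proof. by move=> ql; rewrite (nth_map 0) ?size_iota // nth_iota. Qed.

Lemma fold_perm (T : eqType) (x0 : T) c : uniq c -> 2 <= size c ->
  perm_eq (fold x0 c) c.
Proof.
move=> cu c2.
have fu : uniq (fold x0 c).
  rewrite map_inj_in_uniq ?iota_uniq // => p q; rewrite !mem_iota !add0n => pl ql.
  move/eqP; rewrite nth_uniq ?unf_lt // => /eqP; exact: unf_inj.
have sub : {subset fold x0 c <= c}.
  by move=> y /mapP [q]; rewrite mem_iota add0n => ql ->; apply: mem_nth; rewrite unf_lt.
have [_ Hm] := uniq_min_size fu sub (eq_leq (esym (size_fold x0 c))).
exact: uniq_perm.
Qed.

Lemma fold_adj (T : finType) (e : rel T) (Hsym : symmetric e) (Hreg : two_regular e)
  (x0 : T) c p q : goodc e c -> p < q -> q < size c ->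
  e (nth x0 (fold x0 c) p) (nth x0 (fold x0 c) q) =
  (q == p.+2) || ((q == p.+1) && ((p == 0) || (q.+1 == size c))).
Proof.
case/and3P => cu cc c30 pq qL.
have pL : p < size c := ltn_trans pq qL.
have L5 : 5 <= size c := leq_trans (isT : 5 <= 30) c30.
have L2 : 2 <= size c := leq_trans (isT : 2 <= 5) L5.
rewrite !nth_fold // cyc_adj // ?unf_lt //; last by apply: leq_trans c30.
exact: (unf_adj L5 pq qL).
Qed.

Fixpoint offs (T : Type) (cs : seq (seq T)) : seq nat :=
  if cs is c :: cs' then 0 :: map (addn (size c)) (offs cs') else [:: 0].

Definition gseq (T : Type) (x0 : T) (cs : seq (seq T)) := flatten (map (fold x0) cs).

Lemma gseq_cons (T : Type) (x0 : T) c cs : gseq x0 (c :: cs) = fold x0 c ++ gseq x0 cs.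
Proof. by []. Qed.

Lemma offs0 (T : Type) (cs : seq (seq T)) : 0 \in offs cs.
Proof. by case: cs => [|c cs]; rewrite /= inE eqxx. Qed.

Lemma mem_addn L (s : seq nat) x : (x \in map (addn L) s) = (L <= x) && (x - L \in s).
Proof.
apply/mapP/andP => [[o os ->]|[Lx xs]]; first by rewrite leq_addr addKn.
by exists (x - L) => //; rewrite subnKC.
Qed.

Lemma offs_last (T : Type) x0 (cs : seq (seq T)) : size (gseq x0 cs) \in offs cs.
Proof.
elim: cs => [|c cs IH] /=; first by rewrite inE.
by rewrite inE mem_addn size_cat size_fold leq_addr addKn IH orbT.
Qed.

Lemma offs_le (T : Type) x0 (cs : seq (seq T)) o : o \in offs cs -> o <= size (gseq x0 cs).
Proof.
elim: cs o => [|c cs IH] o /=; first by rewrite inE => /eqP ->.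
rewrite inE mem_addn size_cat size_fold => /orP [/eqP -> //| /andP [Lo /IH]].
by rewrite leq_subLR.
Qed.

Lemma offs_gap (T : finType) (e : rel T) (cs : seq (seq T)) :
  all (goodc e) cs -> forall o1 o2, o1 \in offs cs -> o2 \in offs cs -> o1 < o2 -> o1 + 30 <= o2.
Proof.
elim: cs => [|c cs IH] /=; first by move=> _ o1 o2; rewrite !inE => /eqP -> /eqP ->.
case/andP => /and3P [_ _ c30] /IH {}IH o1 o2; rewrite !inE !mem_addn.
case/orP => [/eqP ->|/andP [h1 h2]]; case/orP => [/eqP ->|/andP [h3 h4]] //.
- move=> _; rewrite add0n; exact: leq_trans c30 h3.
- move=> h; have := IH _ _ h2 h4; move: h h1 h3; clear; lia.
Qed.

Lemma gseq_perm (T : finType) (e : rel T) x0 (cs : seq (seq T)) :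
  all (goodc e) cs -> perm_eq (gseq x0 cs) (flatten cs).
Proof.
elim: cs => [|c cs IH] //= /andP [gc /IH {}IH].
rewrite gseq_cons perm_cat // fold_perm //.
  by case/and3P: gc.
by case/and3P: gc => _ _ h; apply: leq_trans h.
Qed.

Lemma ar4 a b c : a < b + c -> b <= a -> a - b < c.
Proof. lia. Qed.

Definition gEdge (os : seq nat) (p q : nat) :=
  ~~ has (fun o => (p < o) && (o <= q)) os &&
  ((q == p.+2) || ((q == p.+1) && ((p \in os) || (q.+1 \in os)))).

Lemma gE (T : finType) (e : rel T) (Hsym : symmetric e) (Hreg : two_regular e) x0
  (cs : seq (seq T)) : all (goodc e) cs -> uniq (flatten cs) ->
  forall p q, p < q -> q < size (gseq x0 cs) ->
  e (nth x0 (gseq x0 cs) p) (nth x0 (gseq x0 cs) q) = gEdge (offs cs) p q.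
Proof.
elim: cs => [|c cs IH] //= /andP [gc gcs].
rewrite cat_uniq => /and3P [cu dis fu] p q pq.
have {}IH := IH gcs fu.
have L30 : 30 <= size c by case/and3P: gc.
rewrite gseq_cons size_cat size_fold !nth_cat !size_fold => qlt.
rewrite /gEdge /=.
case: (ltnP q (size c)) => qL.
- have pL : p < size c := ltn_trans pq qL.
  rewrite pL fold_adj //.
  have -> : has (fun o => (p < o) && (o <= q)) (map (addn (size c)) (offs cs)) = false.
    apply/hasPn => o /mapP [o' _ ->]; apply/negP => /andP [_ h].
    by move: (leq_trans h (ltnW qL)); rewrite -{2}(addn0 (size c)) leq_add2l leqn0 => /eqP h'; move: h qL; rewrite h' addn0 => h1 h2; move: (leq_ltn_trans h1 h2); rewrite ltnn.
  rewrite !inE !mem_addn (leqNgt (size c) p) pL /= orbF.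
  case: (ltnP q.+1 (size c)) => h.
    by rewrite /= (ltn_eqF h).
  have E : q.+1 = size c by apply/eqP; rewrite eqn_leq qL h.
  by rewrite /= E subnn offs0 eqxx.
- case: (ltnP p (size c)) => pL.
  + rewrite /=.
    have -> : has (fun o => (p < o) && (o <= q)) (map (addn (size c)) (offs cs)).
      apply/hasP; exists (size c + 0); first by apply: map_f; exact: offs0.
      by rewrite addn0 pL qL.
    rewrite /=.
    apply/negP => E.
    set x := nth x0 (fold x0 c) p in E.
    set y := nth x0 (gseq x0 cs) (q - size c) in E.
    have xc : x \in c.
      by rewrite -(perm_mem (fold_perm x0 cu (leq_trans (isT : 2 <= 30) L30))) /x mem_nth ?size_fold.
    have yf : y \in flatten cs.
      by rewrite -(perm_mem (gseq_perm x0 gcs)) /y mem_nth // (ar4 qlt qL).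
    have yc : y \in c.
      case/and3P: gc => cu' cc _; apply: (cyc_closed Hsym Hreg cu cc _ xc E).
      exact: leq_trans L30.
    by move/hasPn: dis => /(_ y yf); rewrite yc.
  + rewrite /=.
    have pq' : p - size c < q - size c by move: pq pL qL; clear; lia.
    have ql' : q - size c < size (gseq x0 cs) by exact: ar4 qlt qL.
    rewrite IH // /gEdge.
    have -> : has (fun o => (p < o) && (o <= q)) (map (addn (size c)) (offs cs)) =
              has (fun o => (p - size c < o) && (o <= q - size c)) (offs cs).
      rewrite has_map; apply: eq_has => o /=; apply/idP/idP; move: pL qL; clear; lia.
    rewrite !inE !mem_addn.
    have -> : (p == 0) = false by apply/eqP; move: pL L30; clear; lia.
    have -> : (q.+1 == 0) = false by [].
    rewrite pL (leq_trans qL (leqnSn _)) /=.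
    have -> : q.+1 - size c = (q - size c).+1 by move: qL; clear; lia.
    have -> : (q == p.+2) = (q - size c == (p - size c).+2).
      by move: pL qL; clear => h1 h2; apply/eqP/eqP; lia.
    have -> : (q == p.+1) = (q - size c == (p - size c).+1).
      by move: pL qL; clear => h1 h2; apply/eqP/eqP; lia.
    done.
Qed.

Definition good (os : seq nat) B := ~~ has (fun o => (B <= o + 2) && (o <= B + 2)) os.

Definition gapped (os : seq nat) := forall o1 o2, o1 \in os -> o2 \in os -> o1 < o2 -> o1 + 30 <= o2.

Lemma gE_le os p q : gEdge os p q -> q <= p.+2.
Proof. case/andP => _ /orP [/eqP ->|/andP [/eqP -> _]] //. Qed.

Lemma good_nin os B o : good os B -> o \in os -> B <= o + 2 -> o <= B + 2 -> False.
Proof. move=> /hasPn H oin h1 h2; move: (H o oin); by rewrite h1 h2. Qed.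

Lemma good_cross os B p q : good os B -> p < B -> B <= q -> p < q -> gEdge os p q ->
  ((p == B - 2) && (q == B)) || ((p == B - 1) && (q == B + 1)).
Proof.
move=> gB pB Bq pq /andP [_ /orP [/eqP E|/andP [/eqP E /orP [pin|qin]]]].
- subst q; apply/orP; case: (ltnP p.+1 B) => h; [left|right]; apply/andP; split; apply/eqP; lia.
- exfalso; apply: (good_nin gB pin); lia.
- exfalso; apply: (good_nin gB qin); lia.
Qed.

Lemma good_e1 os B : good os B -> 2 <= B -> gEdge os (B - 2) B.
Proof.
move=> gB B2; rewrite /gEdge; apply/andP; split.
  apply/hasPn => o oin; apply/negP => /andP [h1 h2]; apply: (good_nin gB oin); lia.
by apply/orP; left; apply/eqP; lia.
Qed.

Lemma good_e2 os B : good os B -> 1 <= B -> gEdge os (B - 1) (B + 1).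
Proof.
move=> gB B1; rewrite /gEdge; apply/andP; split.
  apply/hasPn => o oin; apply/negP => /andP [h1 h2]; apply: (good_nin gB oin); lia.
by apply/orP; left; apply/eqP; lia.
Qed.

Lemma good_ne os B p q : good os B -> 3 <= B -> p < q ->
  ((p == B - 2) && (q == B - 1)) || ((p == B - 1) && (q == B)) || ((p == B) && (q == B + 1))
  || ((p == B - 2) && (q == B + 1)) -> ~~ gEdge os p q.
Proof.
move=> gB B3 pq H; apply/negP => /andP [_ /orP [/eqP E|/andP [/eqP E /orP [pin|qin]]]].
- subst q; move: H; rewrite -!(rwP orP) -!(rwP andP) -!(rwP eqP); lia.
- subst q; apply: (good_nin gB pin); move: H; rewrite -!(rwP orP) -!(rwP andP) -!(rwP eqP); lia.
- subst q; apply: (good_nin gB qin); move: H; rewrite -!(rwP orP) -!(rwP andP) -!(rwP eqP); lia.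
Qed.

Lemma good_lo os B : good os B -> 0 \in os -> 3 <= B.
Proof. move=> gB oin; case: (ltnP 2 B) => // h; exfalso; apply: (good_nin gB oin); lia. Qed.

Lemma good_hi os B n : good os B -> n \in os -> B < n -> B + 3 <= n.
Proof. move=> gB oin Bn; case: (ltnP (B + 2) n) => h; first lia; exfalso; apply: (good_nin gB oin); lia. Qed.

Lemma bad_close os B1 B2 : gapped os -> ~~ good os B1 -> ~~ good os B2 ->
  B1 + 5 <= B2 -> B2 <= B1 + 10 -> False.
Proof.
move=> G /negPn /hasP [o1 o1in /andP [h1 h2]] /negPn /hasP [o2 o2in /andP [h3 h4]] h5 h6.
have o12 : o1 < o2 by lia.
have := G _ _ o1in o2in o12; lia.
Qed.

Lemma window os W1 W2 : gapped os ->
  exists d, [/\ (d == 20) || (d == 25) || (d == 30), good os (W1 + d) & good os (W2 + d)].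
Proof.
move=> G.
have C : forall W, ~~ good os (W + 20) -> good os (W + 25) /\ good os (W + 30).
  move=> W b; split; [case: (boolP (good os (W + 25))) => // b' | case: (boolP (good os (W + 30))) => // b']; case: (bad_close G b b'); lia.
have C' : forall W, ~~ good os (W + 25) -> good os (W + 20) /\ good os (W + 30).
  move=> W b; split; [case: (boolP (good os (W + 20))) => // b'; case: (bad_close G b' b) | case: (boolP (good os (W + 30))) => // b'; case: (bad_close G b b')]; lia.
have C'' : forall W, ~~ good os (W + 30) -> good os (W + 20) /\ good os (W + 25).
  move=> W b; split; [case: (boolP (good os (W + 20))) => // b' | case: (boolP (good os (W + 25))) => // b']; case: (bad_close G b' b); lia.
case: (boolP (good os (W1 + 20))) => a0; case: (boolP (good os (W2 + 20))) => b0.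
- by exists 20.
- have [b5 b10] := C _ b0; case: (boolP (good os (W1 + 25))) => a5.
    by exists 25.
  have [_ a10] := C' _ a5; by exists 30.
- have [a5 a10] := C _ a0; case: (boolP (good os (W2 + 25))) => b5.
    by exists 25.
  have [_ b10] := C' _ b5; by exists 30.
- have [a5 a10] := C _ a0; have [b5 b10] := C _ b0; by exists 25.
Qed.


Lemma down_chain (Q : pred nat) m : (forall k, k.+1 < m -> Q k.+1 -> Q k) ->
  forall j k, j < m -> k <= j -> Q j -> Q k.
Proof.
move=> H j k jm kj; elim: j jm kj => [|j IH] jm kj Qj.
  by move: kj; rewrite leqn0 => /eqP ->.
move: kj; rewrite leq_eqVlt => /orP [/eqP -> //|kj].
apply: IH => //; first exact: ltnW.
exact: H.
Qed.

Lemma count_true (Q : pred nat) a b : (forall k, a <= k < a + b -> Q k) -> count Q (iota a b) = b.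
Proof.
move=> H; rewrite (eq_in_count (a2 := predT)) ?count_predT ?size_iota //.
by move=> k; rewrite mem_iota => /H ->.
Qed.

Lemma count_false (Q : pred nat) a b : (forall k, a <= k < a + b -> ~~ Q k) -> count Q (iota a b) = 0.
Proof.
move=> H; rewrite (eq_in_count (a2 := pred0)) ?count_pred0 //.
by move=> k; rewrite mem_iota => /H /negbTE ->.
Qed.

Lemma cnt_nested (Q : pred nat) m i : (forall k, k.+1 < m -> Q k.+1 -> Q k) -> i < m ->
  (i < count Q (iota 0 m)) = Q i.
Proof.
move=> H im.
have -> : iota 0 m = iota 0 i.+1 ++ iota i.+1 (m - i.+1) by rewrite -iotaD subnKC.
rewrite count_cat.
case: (boolP (Q i)) => Qi.
- rewrite count_true ?leq_addr // => k /andP [_ k1].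
  by apply: (down_chain H im _ Qi); rewrite -ltnS.
- rewrite (count_false (Q := Q) (a := i.+1)) ?addn0.
  + have h : count Q (iota 0 i.+1) <= i.
      rewrite -addn1 iotaD count_cat /= (negbTE Qi) !addn0.
      by have := count_size Q (iota 0 i); rewrite size_iota.
    by rewrite ltnNge h.
  + move=> k /andP [k1 k2]; apply/negP => Qk; move/negP: Qi; apply.
    apply: (down_chain H (j := k)); last exact: Qk.
    - move: k2 im; clear; lia.
    - exact: ltnW.
Qed.

Lemma count_interval lo hi n : lo <= hi -> hi <= n ->
  count (fun p => (lo <= p) && (p < hi)) (iota 0 n) = hi - lo.
Proof.
move=> h1 h2.
have -> : iota 0 n = iota 0 lo ++ iota lo (hi - lo) ++ iota hi (n - hi).
  have e1 : n = lo + ((hi - lo) + (n - hi)) by move: h1 h2; clear; lia.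
  by rewrite {1}e1 !iotaD add0n subnKC.
rewrite !count_cat.
rewrite (count_false (Q := fun p => (lo <= p) && (p < hi)) (a := 0)); last first.
  by move=> k /andP [k1 k2]; apply/negP => /andP [k3 k4]; move: k2 k3; rewrite add0n; clear; lia.
rewrite (count_true (Q := fun p => (lo <= p) && (p < hi)) (a := lo)); last first.
  by move=> k /andP [k1 k2]; apply/andP; split => //; move: k2; rewrite subnKC.
rewrite (count_false (Q := fun p => (lo <= p) && (p < hi)) (a := hi)) ?addn0 //.
by move=> k /andP [k1 k2]; apply/negP => /andP [k3 k4]; move: k1 k4; clear; lia.
Qed.

Lemma count_diff (A B : pred nat) s : (forall x, B x -> A x) ->
  count (fun x => A x && ~~ B x) s = count A s - count B s.
Proof.
move=> H; have := count_predC B (filter A s).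
rewrite !count_filter.
have -> : count (predI B A) s = count B s.
  by apply: eq_count => x /=; case: (boolP (B x)) => // /H ->.
have -> : count (predI (predC B) A) s = count (fun x => A x && ~~ B x) s.
  by apply: eq_count => x /=; rewrite andbC.
rewrite size_filter => <-; by rewrite addKn.
Qed.

Definition Pk (u d : nat -> nat) k p := (u k <= p) && (p < d k).
Definition label m (u d : nat -> nat) p := count (fun k => Pk u d k p) (iota 0 m).

Definition udok m n (u d : nat -> nat) :=
  [/\ forall k, k.+1 < m -> u k + 20 <= u k.+1,
      forall k, k.+1 < m -> d k.+1 + 20 <= d k,
      forall k k', k < m -> k' < m -> u k + 20 <= d k',
      forall k, k < m -> 20 <= u k
    & forall k, k < m -> d k + 20 <= n].

Section Lab.
End Lab.

Lemma nestP m n u d k p : udok m n u d -> k.+1 < m -> Pk u d k.+1 p -> Pk u d k p.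
Proof.
case=> HU HD _ _ _ km /andP [h1 h2]; apply/andP; split.
  by apply: leq_trans h1; apply: leq_trans (HU k km); apply: leq_addr.
by apply: (leq_trans h2); apply: leq_trans (HD k km); apply: leq_addr.
Qed.

Lemma label_ge m n u d i p : udok m n u d -> i < m -> (i < label m u d p) = Pk u d i p.
Proof. move=> H im; apply: cnt_nested => // k km; exact: nestP H km. Qed.

Lemma label_le m u d p : label m u d p <= m.
Proof. by have := count_size (fun k => Pk u d k p) (iota 0 m); rewrite size_iota. Qed.

Lemma label_eq m n u d i p : udok m n u d -> i <= m ->
  (label m u d p == i) = ((i == 0) || Pk u d i.-1 p) && ((i == m) || ~~ Pk u d i p).
Proof.
move=> H im; rewrite eqn_leq andbC; congr (_ && _).
- case: i im => [|i] im //=.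
  by rewrite -(label_ge p H im).
- case: (eqVneq i m) => [->|ne] /=; first by rewrite label_le.
  have im' : i < m by rewrite ltn_neqAle ne im.
  by rewrite -(label_ge p H im') leqNgt.
Qed.

Lemma label_count m n u d i : udok m n u d -> i <= m ->
  (forall k, k < m -> d k <= n) ->
  count (fun p => label m u d p == i) (iota 0 n) =
  (if i == 0 then n else d i.-1 - u i.-1) - (if i == m then 0 else d i - u i).
Proof.
move=> H im Hdn.
have Hud : forall k, k < m -> u k <= d k.
  by case: H => _ _ HX _ _ k km; apply: leq_trans (HX k k km km); apply: leq_addr.
rewrite (eq_count (a2 := fun p => ((i == 0) || Pk u d i.-1 p) && ~~ ((i != m) && Pk u d i p))); last first.
  by move=> p /=; rewrite (label_eq _ H) // negb_and negbK.
rewrite count_diff; last first.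
  move=> p /andP [ne Pi]; case: i im ne Pi => [|i] im ne Pi //=.
  by apply: nestP H _ Pi; rewrite ltn_neqAle ne im.
congr (_ - _).
- case: i im => [|i] im /=; first by rewrite count_predT size_iota.
  by apply: count_interval; [apply: Hud | apply: Hdn].
- case: (eqVneq i m) => [->|ne] /=; first by rewrite count_pred0.
  have im' : i < m by rewrite ltn_neqAle ne im.
  by apply: count_interval; [apply: Hud | apply: Hdn].
Qed.

Lemma label_same m u d p q : p <= q ->
  (forall k, k < m -> ~~ ((p < u k) && (u k <= q)) && ~~ ((p < d k) && (d k <= q))) ->
  label m u d p = label m u d q.
Proof.
move=> pq H; apply: eq_in_count => k; rewrite mem_iota add0n => km.
move: (H k km); rewrite /Pk; move: pq; clear.
case: (leqP (u k) p); case: (leqP (u k) q); case: (ltnP p (d k)); case: (ltnP q (d k)) => //= *; lia.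
Qed.

Lemma label_up m n u d k p q : udok m n u d -> k < m -> p < u k -> u k <= q -> q <= p.+2 ->
  label m u d p = k /\ label m u d q = k.+1.
Proof.
move=> H km h1 h2 h3; have [HU HD HX HL HB] := H.
split; apply/eqP; rewrite (label_eq _ H) //; try exact: ltnW.
- apply/andP; split.
    case: k km h1 h2 h3 => [|k] //= km h1 h2 h3; apply/andP; split.
      have := HU k km; lia.
    have := HX k.+1 k km (ltnW km); lia.
  by rewrite /Pk leqNgt h1 orbT.
- apply/andP; split.
    by rewrite /= /Pk h2 /=; have := HX k k km km; lia.
  case: (eqVneq k.+1 m) => [//|ne] /=; apply/negP => /andP [h4 _].
  have := HU k; rewrite ltn_neqAle ne km => /(_ isT); lia.
Qed.

Lemma label_dn m n u d k p q : udok m n u d -> k < m -> p < d k -> d k <= q -> q <= p.+2 ->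
  label m u d p = k.+1 /\ label m u d q = k.
Proof.
move=> H km h1 h2 h3; have [HU HD HX HL HB] := H.
split; apply/eqP; rewrite (label_eq _ H) //; try exact: ltnW.
- apply/andP; split.
    by rewrite /= /Pk h1 andbT; have := HX k k km km; lia.
  case: (eqVneq k.+1 m) => [//|ne] /=; apply/negP => /andP [_ h4].
  have := HD k; rewrite ltn_neqAle ne km => /(_ isT); lia.
- apply/andP; split.
    case: k km h1 h2 h3 => [|k] //= km h1 h2 h3; apply/andP; split.
      have := HX k k.+1 (ltnW km) km; lia.
    have := HD k km; lia.
  by rewrite /Pk ltnNge h2 andbF orbT.
Qed.


Lemma choose_u os m n (N : nat -> nat) : gapped os ->
  exists u : nat -> nat, forall k, k < m ->
    [/\ (if k is k'.+1 then (u k' + 20 <= u k) && (u k <= u k' + 30)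
         else (20 <= u 0) && (u 0 <= 30)),
        good os (u k) & good os (u k + (n - N k))].
Proof.
move=> G; elim: m => [|m [u Hu]]; first by exists (fun _ => 0).
set W1 := if m is m'.+1 then u m' else 0.
have [dl [Hd g1 g2]] := window (W1) (W1 + (n - N m)) G.
exists (fun k => if k == m then W1 + dl else u k) => k.
rewrite ltnS leq_eqVlt => /orP [/eqP ->|km].
- rewrite eqxx; split => //.
  + rewrite /W1; clear g1 g2 W1; case: m Hu => [|m'] Hu /=.
      by rewrite add0n; move: Hd; rewrite -!(rwP orP) -!(rwP eqP); clear; lia.
    rewrite (ltn_eqF (ltnSn m')); move: Hd; rewrite -!(rwP orP) -!(rwP eqP) -!(rwP andP); clear; lia.
  + by rewrite addnAC.
- rewrite (ltn_eqF km).
  have [h1 h2 h3] := Hu k km; split => //.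
  case: k km h1 {h2 h3} => [|k] km; first by rewrite (ltn_eqF km).
  by rewrite (ltn_eqF (ltnW km)).
Qed.

Lemma build_ok m n (u N nsn : nat -> nat) :
  (forall k, N k.+1 = N k + nsn k.+1) -> N 0 = nsn 0 -> N m = n ->
  (forall i, i <= m -> 50 <= nsn i) ->
  (forall k, k < m -> if k is k'.+1 then (u k' + 20 <= u k) && (u k <= u k' + 30)
                     else (20 <= u 0) && (u 0 <= 30)) ->
  [/\ udok m n u (fun k => u k + (n - N k)),
      (forall k, k < m -> u k + (n - N k) <= n) &
      (forall i, i <= m -> (if i == 0 then n else (u i.-1 + (n - N i.-1)) - u i.-1)
                   - (if i == m then 0 else (u i + (n - N i)) - u i) = nsn i)].
Proof.
move=> HN HN0 HNm Hns Hu.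
have Nmono : forall j k, j <= k -> k <= m -> N j + 50 * (k - j) <= N k.
  move=> j; elim=> [|k IH] jk km.
    by move: jk; rewrite leqn0 => /eqP ->; rewrite muln0 addn0.
  move: jk; rewrite leq_eqVlt => /orP [/eqP ->|jk]; first by rewrite subnn muln0 addn0.
  have := IH jk (ltnW km); have := Hns _ km; rewrite HN; move: jk; clear; lia.
have ub : forall j k, j <= k -> k < m -> u j + 20 * (k - j) <= u k <= u j + 30 * (k - j).
  move=> j; elim=> [|k IH] jk km.
    by move: jk; rewrite leqn0 => /eqP ->; rewrite !muln0 !addn0 leqnn.
  move: jk; rewrite leq_eqVlt => /orP [/eqP ->|jk]; first by rewrite subnn !muln0 !addn0 leqnn.
  have := IH jk (ltnW km); have := Hu _ km; move: jk; clear => jk.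
  rewrite -!(rwP andP); lia.
have u0 : 0 < m -> 20 <= u 0 <= 30 by move=> m0; exact: (Hu 0 m0).
have Nle : forall k, k <= m -> N k <= n.
  by move=> k km; rewrite -HNm; apply: leq_trans (Nmono k m km (leqnn _)); apply: leq_addr.
have NS : forall k, k < m -> N k + 50 <= N k.+1.
  by move=> k km; rewrite HN leq_add2l; apply: Hns.
have hd : forall k, k < m -> u k + (n - N k) <= n.
  move=> k km; have := Nle k (ltnW km); have := ub 0 k (leq0n _) km; have := u0 (leq_ltn_trans (leq0n _) km).
  have := Nmono 0 k (leq0n _) (ltnW km); rewrite HN0; have := Hns 0 (leq0n _).
  rewrite -!(rwP andP); clear; lia.
split => //.
- split.
  + move=> k km; have := Hu _ km; rewrite -!(rwP andP); lia.
  + move=> k km; have := Hu _ km; have := NS _ (ltnW km); have := Nle _ (ltnW km).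
    rewrite -!(rwP andP); clear; lia.
  + move=> k k' km km'.
    have Nk' := Nmono k' m (ltnW km') (leqnn _); rewrite HNm in Nk'.
    case: (leqP k k') => kk.
      have := ub k k' kk km'; rewrite -!(rwP andP); move: Nk' km'; clear; lia.
    have := ub k' k (ltnW kk) km; rewrite -!(rwP andP); move: Nk' km' km kk; clear; nia.
  + move=> k km; have := ub 0 k (leq0n _) km; have := u0 (leq_ltn_trans (leq0n _) km).
    rewrite -!(rwP andP); clear; lia.
  + move=> k km; have := Nle k (ltnW km); have := ub 0 k (leq0n _) km; have := u0 (leq_ltn_trans (leq0n _) km).
    have := Nmono 0 k (leq0n _) (ltnW km); rewrite HN0; have := Hns 0 (leq0n _).
    rewrite -!(rwP andP); clear; lia.
- move=> i im; rewrite !addKn.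
  case: (eqVneq i 0) => [->|i0] /=.
    case: (eqVneq 0 m) => [m0|m0] /=; first by rewrite subn0 -HNm -m0 HN0.
    have := Nle 0 (leq0n _); rewrite HN0; clear; lia.
  case: i i0 im => [|i] // _ im /=.
  case: (eqVneq i.+1 m) => [im'|im'] /=.
    rewrite subn0 -{1}HNm -im' HN; have := Nle i (ltnW im); clear; lia.
  have im2 : i.+1 < m by rewrite ltn_neqAle im' im.
  have := Nle _ (ltnW im2); rewrite HN; clear; lia.
Qed.


Lemma cross_classify m n u d p q : udok m n u d -> p < q -> q <= p.+2 ->
  [\/ label m u d p = label m u d q,
      exists2 k, k < m & [/\ p < u k, u k <= q, label m u d p = k & label m u d q = k.+1] |
      exists2 k, k < m & [/\ p < d k, d k <= q, label m u d p = k.+1 & label m u d q = k]].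
Proof.
move=> H pq qp.
case: (boolP (has (fun k => (p < u k) && (u k <= q)) (iota 0 m))) => [/hasP [k] | hu].
  rewrite mem_iota add0n => km /andP [h1 h2].
  have [l1 l2] := label_up H km h1 h2 qp.
  by apply: Or32; exists k.
case: (boolP (has (fun k => (p < d k) && (d k <= q)) (iota 0 m))) => [/hasP [k] | hd].
  rewrite mem_iota add0n => km /andP [h1 h2].
  have [l1 l2] := label_dn H km h1 h2 qp.
  by apply: Or33; exists k.
apply: Or31; apply: label_same; first exact: ltnW.
move=> k km; apply/andP; split.
  by move/hasPn: hu => /(_ k); rewrite mem_iota add0n km; apply.
by move/hasPn: hd => /(_ k); rewrite mem_iota add0n km; apply.
Qed.

Lemma u_chain m n u d k k' : udok m n u d -> k < k' -> k' < m -> u k + 20 <= u k'.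
Proof.
case=> HU _ _ _ _; elim: k' => [|k' IH] // kk km.
move: kk; rewrite ltnS leq_eqVlt => /orP [/eqP ->|kk]; first exact: HU.
have := IH kk (ltnW km); have := HU k' km; lia.
Qed.

Lemma d_chain m n u d k k' : udok m n u d -> k < k' -> k' < m -> d k' + 20 <= d k.
Proof.
case=> _ HD _ _ _; elim: k' => [|k' IH] // kk km.
move: kk; rewrite ltnS leq_eqVlt => /orP [/eqP ->|kk]; first exact: HD.
have := IH kk (ltnW km); have := HD k' km; lia.
Qed.

Definition isbnd m (u d : nat -> nat) B := has (fun k => (B == u k) || (B == d k)) (iota 0 m).

Lemma bnd_sep m n u d B1 B2 : udok m n u d -> isbnd m u d B1 -> isbnd m u d B2 -> B1 < B2 ->
  B1 + 20 <= B2.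
Proof.
move=> H /hasP [k1]; rewrite mem_iota add0n => k1m /orP [] /eqP ->;
  move=> /hasP [k2]; rewrite mem_iota add0n => k2m /orP [] /eqP -> lt.
- case: (ltngtP k1 k2) => kk.
  + exact: u_chain H kk k2m.
  + by have := u_chain H kk k1m; lia.
  + by move: lt; rewrite kk ltnn.
- by case: H => _ _ HX _ _; apply: HX.
- by case: H => _ _ HX _ _; have := HX k2 k1 k2m k1m; lia.
- case: (ltngtP k1 k2) => kk.
  + by have := d_chain H kk k2m; lia.
  + exact: d_chain H kk k1m.
  + by move: lt; rewrite kk ltnn.
Qed.

Record setup (T : finType) (e : rel T) (x0 : T) (s : seq T) (n : nat) (os : seq nat)
  (m : nat) (u d : nat -> nat) : Prop := Setup {
  s_sym : symmetric e; s_irr : irreflexive e;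
  s_uniq : uniq s; s_size : size s = n; s_cov : forall x, x \in s;
  s_E : forall p q, p < q -> q < n -> e (nth x0 s p) (nth x0 s q) = gEdge os p q;
  s_ok : udok m n u d;
  s_good : forall B, isbnd m u d B -> good os B;
  s_O0 : 0 \in os; s_On : n \in os;
  s_bn : forall B, isbnd m u d B -> B < n }.

Definition ppair (B : nat) (b : bool) := if b then (B - 1, B + 1) else (B - 2, B).

Lemma bnd3 (T : finType) (e : rel T) (x0 : T) (s : seq T) (n : nat) (os : seq nat) (m : nat) (u d : nat -> nat) B : setup e x0 s n os m u d -> isbnd m u d B ->
  3 <= B /\ B + 3 <= n.
Proof.
move=> S hB; split; first exact: good_lo (s_good S hB) (s_O0 S).
exact: good_hi (s_good S hB) (s_On S) (s_bn S hB).
Qed.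

Lemma ppair_sep (T : finType) (e : rel T) (x0 : T) (s : seq T) (n : nat) (os : seq nat) (m : nat) (u d : nat -> nat) B1 b1 B2 b2 pa pb : setup e x0 s n os m u d ->
  isbnd m u d B1 -> isbnd m u d B2 -> (B1 != B2) || (b1 != b2) ->
  (pa == (ppair B1 b1).1) || (pa == (ppair B1 b1).2) ->
  (pb == (ppair B2 b2).1) || (pb == (ppair B2 b2).2) ->
  [/\ pa != pb, pa < pb -> ~~ gEdge os pa pb & pb < pa -> ~~ gEdge os pb pa].
Proof.
move=> S h1 h2 ne ha hb.
have [l1 g1] := bnd3 S h1; have [l2 g2] := bnd3 S h2.
have far : forall p q, p + 3 <= q -> ~~ gEdge os p q.
  by move=> p q pq; apply/negP => /gE_le; lia.
case: (ltngtP B1 B2) => BB.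
- have sep := bnd_sep (s_ok S) h1 h2 BB.
  have [ha' hb'] : (B1 - 2 <= pa <= B1 + 1) /\ (B2 - 2 <= pb <= B2 + 1).
    by move: ne ha hb; case: b1; case: b2 => _; rewrite /ppair /= -!(rwP orP) -!(rwP eqP) -!(rwP andP); lia.
  split; [apply/eqP; lia | move=> _; apply: far; lia | lia].
- have sep := bnd_sep (s_ok S) h2 h1 BB.
  have [ha' hb'] : (B1 - 2 <= pa <= B1 + 1) /\ (B2 - 2 <= pb <= B2 + 1).
    by move: ne ha hb; case: b1; case: b2 => _; rewrite /ppair /= -!(rwP orP) -!(rwP eqP) -!(rwP andP); lia.
  split; [apply/eqP; lia | lia | move=> _; apply: far; lia].
- subst B2; rewrite eqxx /= in ne.
  have gB := s_good S h1.
  have key : forall p q, p < q -> (p == pa) && (q == pb) || (p == pb) && (q == pa) -> ~~ gEdge os p q.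
    move=> p q pq hpq; apply: (good_ne gB l1 pq).
    by move: ne ha hb hpq; case: b1; case: b2 => //= _; rewrite -!(rwP orP) -!(rwP eqP) -!(rwP andP); lia.
  split.
  + by move: ne ha hb; case: b1; case: b2 => //= _ ha' hb'; apply/eqP; move: ha' hb'; rewrite -!(rwP orP) -!(rwP eqP); lia.
  + by move=> lt; apply: key => //; rewrite !eqxx.
  + by move=> lt; apply: key => //; rewrite !eqxx orbT.
Qed.

Lemma set2C (T : finType) (x y : T) : [set x; y] = [set y; x].
Proof. by apply/setP => z; rewrite !inE orbC. Qed.

Section dummy. End dummy.

Lemma nth_pos (T : finType) (x0 : T) s x : x \in s -> nth x0 s (index x s) = x.
Proof. exact: nth_index. Qed.

Lemma pos_lt (T : finType) (e : rel T) (x0 : T) (s : seq T) (n : nat) (os : seq nat) (m : nat) (u d : nat -> nat) x : setup e x0 s n os m u d -> index x s < n.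
Proof. by move=> S; rewrite -(s_size S) index_mem (s_cov S). Qed.

Lemma e_pos (T : finType) (e : rel T) (x0 : T) (s : seq T) (n : nat) (os : seq nat) (m : nat) (u d : nat -> nat) x y : setup e x0 s n os m u d ->
  index x s < index y s -> e x y = gEdge os (index x s) (index y s).
Proof.
move=> S lt; rewrite -(s_E S lt (pos_lt y S)).
by rewrite !nth_index ?(s_cov S).
Qed.

Lemma e_nth (T : finType) (e : rel T) (x0 : T) (s : seq T) (n : nat) (os : seq nat) (m : nat) (u d : nat -> nat) p q : setup e x0 s n os m u d -> p < n -> q < n -> p != q ->
  (p < q -> ~~ gEdge os p q) -> (q < p -> ~~ gEdge os q p) ->
  nth x0 s p != nth x0 s q /\ ~~ e (nth x0 s p) (nth x0 s q).
Proof.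
move=> S pn qn pq h1 h2; split.
  by rewrite nth_uniq ?(s_size S) ?(s_uniq S).
case: (ltngtP p q) => lt.
- by rewrite (s_E S lt qn); apply: h1.
- by rewrite (s_sym S) (s_E S lt pn); apply: h2.
- by move: pq; rewrite lt eqxx.
Qed.

Lemma cross_at (T : finType) (e : rel T) (x0 : T) (s : seq T) (n : nat) (os : seq nat) (m : nat) (u d : nat -> nat) x y : setup e x0 s n os m u d -> e x y -> index x s < index y s ->
  label m u d (index x s) != label m u d (index y s) ->
  exists B b, [/\ isbnd m u d B, index x s = (ppair B b).1 & index y s = (ppair B b).2].
Proof.
move=> S exy lt ne.
have ge : gEdge os (index x s) (index y s) by rewrite -(e_pos S lt).
have le := gE_le ge.
have fin : forall B, isbnd m u d B -> index x s < B -> B <= index y s ->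
    exists B b, [/\ isbnd m u d B, index x s = (ppair B b).1 & index y s = (ppair B b).2].
  move=> B hB h1 h2.
  have := good_cross (s_good S hB) h1 h2 lt ge => /orP [] /andP [/eqP e1 /eqP e2].
  - by exists B, false.
  - by exists B, true.
case: (cross_classify (s_ok S) lt le) => [eq|[k km [h1 h2 _ _]]|[k km [h1 h2 _ _]]].
- by move: ne; rewrite eq eqxx.
- apply: (fin (u k)) => //; apply/hasP; exists k; rewrite ?mem_iota ?eqxx //.
- apply: (fin (d k)) => //; apply/hasP; exists k; rewrite ?mem_iota ?eqxx ?orbT //.
Qed.

Lemma cross_form (T : finType) (e : rel T) (x0 : T) (s : seq T) (n : nat) (os : seq nat) (m : nat) (u d : nat -> nat) t (f : T -> 'I_t) A : setup e x0 s n os m u d ->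
  (forall x, val (f x) = label m u d (index x s)) ->
  A \in cross_edges e f ->
  exists B b, isbnd m u d B /\ A = [set nth x0 s (ppair B b).1; nth x0 s (ppair B b).2].
Proof.
move=> S Hf; rewrite inE => /existsP [x /existsP [y /and3P [/eqP -> exy fne]]].
have ne : label m u d (index x s) != label m u d (index y s).
  by rewrite -!Hf; apply: contra fne => /eqP h; apply/eqP; apply: val_inj.
have xy : index x s != index y s.
  apply/negP => /eqP h; move: exy; have : x = y.
    by rewrite -(nth_index x0 (s_cov S x)) h nth_index ?(s_cov S).
  by move=> ->; rewrite (s_irr S).
case: (ltngtP (index x s) (index y s)) => lt.
- have [B [b [hB h1 h2]]] := cross_at S exy lt ne.
  by exists B, b; split => //; rewrite -h1 -h2 !nth_index ?(s_cov S).
- rewrite (s_sym S) in exy; rewrite eq_sym in ne.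
  have [B [b [hB h1 h2]]] := cross_at S exy lt ne.
  by exists B, b; split => //; rewrite -h1 -h2 !nth_index ?(s_cov S) // set2C.
- by move: xy; rewrite lt eqxx.
Qed.

Lemma pp_nonadj (T : finType) (e : rel T) (x0 : T) (s : seq T) (n : nat) (os : seq nat) (m : nat) (u d : nat -> nat) B1 b1 B2 b2 pa pb : setup e x0 s n os m u d ->
  isbnd m u d B1 -> isbnd m u d B2 -> (B1 != B2) || (b1 != b2) ->
  (pa == (ppair B1 b1).1) || (pa == (ppair B1 b1).2) ->
  (pb == (ppair B2 b2).1) || (pb == (ppair B2 b2).2) ->
  nth x0 s pa != nth x0 s pb /\ ~~ e (nth x0 s pa) (nth x0 s pb).
Proof.
move=> S h1 h2 ne ha hb.
have [l1 g1] := bnd3 S h1; have [l2 g2] := bnd3 S h2.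
have [q1 q2 q3] := ppair_sep S h1 h2 ne ha hb.
apply: (e_nth S) => //.
- by move: ha; case: (b1); rewrite /ppair /= -!(rwP orP) -!(rwP eqP); lia.
- by move: hb; case: (b2); rewrite /ppair /= -!(rwP orP) -!(rwP eqP); lia.
Qed.

Lemma prop3 (T : finType) (e : rel T) (x0 : T) (s : seq T) (n : nat) (os : seq nat) (m : nat) (u d : nat -> nat) t (f : T -> 'I_t) : setup e x0 s n os m u d ->
  (forall x, val (f x) = label m u d (index x s)) ->
  induced_matching e (cross_edges e f).
Proof.
move=> S Hf; split.
  apply/subsetP => A; rewrite !inE => /existsP [x /existsP [y /and3P [h1 h2 _]]].
  by apply/existsP; exists x; apply/existsP; exists y; rewrite h1 h2.
move=> A A' hA hA' AA a b aA bA'.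
have [B1 [b1 [h1 eA]]] := cross_form S Hf hA.
have [B2 [b2 [h2 eA']]] := cross_form S Hf hA'.
have ne : (B1 != B2) || (b1 != b2).
  case: (eqVneq B1 B2) => [E1|ne1] //.
  case: (eqVneq b1 b2) => [E2|ne2]; last by rewrite orbT.
  by move: AA; rewrite eA eA' E1 E2 eqxx.
move: aA bA'; rewrite eA eA' !inE => /orP [] /eqP -> /orP [] /eqP ->;
  by apply: (pp_nonadj S h1 h2 ne); rewrite ?eqxx ?orbT.
Qed.

Lemma idx_nth (T : finType) (e : rel T) (x0 : T) (s : seq T) (n : nat) (os : seq nat) (m : nat) (u d : nat -> nat) p : setup e x0 s n os m u d -> p < n -> index (nth x0 s p) s = p.
Proof. by move=> S pn; rewrite index_uniq ?(s_size S) ?(s_uniq S). Qed.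

Lemma idx_neq (T : finType) (e : rel T) (x0 : T) (s : seq T) (n : nat) (os : seq nat) (m : nat) (u d : nat -> nat) x y : setup e x0 s n os m u d -> e x y -> index x s != index y s.
Proof.
move=> S exy; apply/negP => /eqP h; move: exy; have : x = y.
  by rewrite -(nth_index x0 (s_cov S x)) h nth_index ?(s_cov S).
by move=> ->; rewrite (s_irr S).
Qed.

Lemma prop2 (T : finType) (e : rel T) (x0 : T) (s : seq T) (n : nat) (os : seq nat) (m : nat) (u d : nat -> nat) x y : setup e x0 s n os m u d -> e x y ->
  label m u d (index x s) <= label m u d (index y s) + 1 /\
  label m u d (index y s) <= label m u d (index x s) + 1.
Proof.
move=> S exy.
have key : forall x y, e x y -> index x s < index y s ->
  label m u d (index x s) <= label m u d (index y s) + 1 /\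
  label m u d (index y s) <= label m u d (index x s) + 1.
  move=> a b eab lt.
  have le := gE_le (etrans (esym (e_pos S lt)) eab).
  case: (cross_classify (s_ok S) lt le) => [->|[k _ [_ _ -> ->]]|[k _ [_ _ -> ->]]]; lia.
case: (ltngtP (index x s) (index y s)) => lt.
- exact: key.
- by rewrite (s_sym S) in exy; have [] := key _ _ exy lt.
- by move: (idx_neq S exy); rewrite lt eqxx.
Qed.

Lemma oeq1 (x y : nat) : (x == x) || (x == y). Proof. by rewrite eqxx. Qed.
Lemma oeq2 (x y : nat) : (x == y) || (x == x). Proof. by rewrite eqxx orbT. Qed.

Definition PS (T : finType) (x0 : T) (s : seq T) B b :=
  [set nth x0 s (ppair B b).1; nth x0 s (ppair B b).2].

Lemma PS_neq (T : finType) (e : rel T) (x0 : T) (s : seq T) (n : nat) (os : seq nat) (m : nat) (u d : nat -> nat) B1 b1 B2 b2 : setup e x0 s n os m u d ->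
  isbnd m u d B1 -> isbnd m u d B2 -> (B1 != B2) || (b1 != b2) ->
  PS x0 s B1 b1 != PS x0 s B2 b2.
Proof.
move=> S h1 h2 ne; apply/negP => /eqP E.
have : nth x0 s (ppair B1 b1).1 \in PS x0 s B2 b2 by rewrite -E !inE eqxx.
rewrite !inE => /orP [] /eqP.
- by have [/eqP] := pp_nonadj S h1 h2 ne (oeq1 _ _) (oeq1 _ _).
- by have [/eqP] := pp_nonadj S h1 h2 ne (oeq1 _ _) (oeq2 _ _).
Qed.

Lemma prop4 (T : finType) (e : rel T) (x0 : T) (s : seq T) (n : nat) (os : seq nat) (m : nat) (u d : nat -> nat) t (f : T -> 'I_t) i : setup e x0 s n os m u d ->
  (forall x, val (f x) = label m u d (index x s)) -> i < m ->
  #|edges_between e f i| = 4.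
Proof.
move=> S Hf im.
have hU : isbnd m u d (u i) by apply/hasP; exists i; rewrite ?mem_iota ?eqxx.
have hD : isbnd m u d (d i) by apply/hasP; exists i; rewrite ?mem_iota ?eqxx ?orbT.
have UD : u i + 20 <= d i by case: (s_ok S) => _ _ HX _ _; apply: HX.
have [lU gU] := bnd3 S hU; have [lD gD] := bnd3 S hD.
have -> : edges_between e f i =
  PS x0 s (u i) false |: (PS x0 s (u i) true |: (PS x0 s (d i) false |: [set PS x0 s (d i) true])).
  apply/setP => A; rewrite !inE; apply/idP/idP.
  - move=> /existsP [x /existsP [y /and3P [/eqP -> exy hl]]].
    rewrite !Hf in hl.
    have key : forall x y, e x y -> index x s < index y s ->
      ((label m u d (index x s) == i) && (label m u d (index y s) == i.+1))
      || ((label m u d (index y s) == i) && (label m u d (index x s) == i.+1)) ->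
      [|| [set x; y] == PS x0 s (u i) false, [set x; y] == PS x0 s (u i) true,
          [set x; y] == PS x0 s (d i) false | [set x; y] == PS x0 s (d i) true].
      move=> a b eab lt hl'.
      have ge : gEdge os (index a s) (index b s) by rewrite -(e_pos S lt).
      have le := gE_le ge.
      have eqs : forall B bb, index a s = (ppair B bb).1 -> index b s = (ppair B bb).2 ->
          [set a; b] = PS x0 s B bb.
        by move=> B bb hh1 hh2; rewrite /PS -hh1 -hh2 !nth_index ?(s_cov S).
      case: (cross_classify (s_ok S) lt le) => [eq|[k km [h1 h2 l1 l2]]|[k km [h1 h2 l1 l2]]].
      + by move: hl'; rewrite eq -!(rwP orP) -!(rwP andP) -!(rwP eqP); lia.
      + have ki : k = i by move: hl'; rewrite l1 l2 -!(rwP orP) -!(rwP andP) -!(rwP eqP); lia.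
        rewrite ki in h1 h2.
        have := good_cross (s_good S hU) h1 h2 lt ge => /orP [] /andP [/eqP e1 /eqP e2].
        * by rewrite (eqs (u i) false) ?eqxx.
        * by rewrite (eqs (u i) true) ?eqxx ?orbT.
      + have ki : k = i by move: hl'; rewrite l1 l2 -!(rwP orP) -!(rwP andP) -!(rwP eqP); lia.
        rewrite ki in h1 h2.
        have := good_cross (s_good S hD) h1 h2 lt ge => /orP [] /andP [/eqP e1 /eqP e2].
        * by rewrite (eqs (d i) false) ?eqxx ?orbT.
        * by rewrite (eqs (d i) true) ?eqxx ?orbT.
    case: (ltngtP (index x s) (index y s)) => lt.
    + by apply: key.
    + rewrite set2C; apply: key => //; first by rewrite (s_sym S).
      by rewrite orbC.
    + by move: (idx_neq S exy); rewrite lt eqxx.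
  - have mk : forall p q, p < q -> q < n -> gEdge os p q ->
        ((label m u d p == i) && (label m u d q == i.+1))
        || ((label m u d q == i) && (label m u d p == i.+1)) ->
        [exists x, exists y, [&& [set nth x0 s p; nth x0 s q] == [set x; y], e x y &
          ((val (f x) == i) && (val (f y) == i.+1)) || ((val (f y) == i) && (val (f x) == i.+1))]].
      move=> p q pq qn ge hl; apply/existsP; exists (nth x0 s p); apply/existsP; exists (nth x0 s q).
      rewrite eqxx (s_E S pq qn) ge /= !Hf !(idx_nth S) //; exact: ltn_trans qn.
    have n1 : d i + 1 < n by lia.
    have gUU := s_good S hU; have gDD := s_good S hD.
    move=> /or4P [] /eqP ->; rewrite /PS /ppair /=.
    + apply: mk; [lia | lia | apply: good_e1 => //; lia | ].
      have [-> ->] := label_up (s_ok S) im (ltac:(lia) : u i - 2 < u i) (leqnn _)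
        (ltac:(lia) : u i <= (u i - 2).+2).
      by rewrite !eqxx.
    + apply: mk; [lia | lia | apply: good_e2 => //; lia | ].
      have [-> ->] := label_up (s_ok S) im (ltac:(lia) : u i - 1 < u i) (ltac:(lia) : u i <= u i + 1)
        (ltac:(lia) : u i + 1 <= (u i - 1).+2).
      by rewrite !eqxx.
    + apply: mk; [lia | lia | apply: good_e1 => //; lia | ].
      have [-> ->] := label_dn (s_ok S) im (ltac:(lia) : d i - 2 < d i) (leqnn _)
        (ltac:(lia) : d i <= (d i - 2).+2).
      by rewrite !eqxx orbT.
    + apply: mk; [lia | lia | apply: good_e2 => //; lia | ].
      have [-> ->] := label_dn (s_ok S) im (ltac:(lia) : d i - 1 < d i) (ltac:(lia) : d i <= d i + 1)
        (ltac:(lia) : d i + 1 <= (d i - 1).+2).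
      by rewrite !eqxx orbT.
have ne : forall B1 b1 B2 b2, isbnd m u d B1 -> isbnd m u d B2 -> (B1 != B2) || (b1 != b2) ->
  (PS x0 s B1 b1 == PS x0 s B2 b2) = false.
  by move=> B1 b1 B2 b2 h1 h2 h; apply/negbTE; apply: (PS_neq S).
have UDn : (u i != d i) by apply/eqP; lia.
have DUn : (d i != u i) by apply/eqP; lia.
rewrite !cardsU1 cards1 !inE !ne //; rewrite ?UDn ?DUn ?orbT //.
Qed.

Unset Implicit Arguments. Set Strict Implicit.

Lemma card_count (T : finType) (s : seq T) (P : pred T) : uniq s -> (forall x, x \in s) ->
  #|[set x | P x]| = count P s.
Proof.
move=> Hu Hc; rewrite -size_filter -(card_uniqP (filter_uniq P Hu)).
by apply: eq_card => x; rewrite inE mem_filter Hc andbT.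
Qed.

Theorem lemma4p10 (n t : nat) (T : finType) (e : rel T)
  (HT : #|T| = n) (Hsimple : simple_graph e) (Hreg : two_regular e)
  (Hgirth : cycles_at_least 30 e)
  (ns : 'I_t -> nat) (Hsum : \sum_(i < t) ns i = n)
  (Hns : forall i : 'I_t, 50 <= ns i) :
  exists f : T -> 'I_t,
    [/\ (forall i : 'I_t, #|[set x | f x == i]| = ns i),
        (forall x y : T, e x y -> f x <= f y + 1 /\ f y <= f x + 1),
        induced_matching e (cross_edges e f)
      & (forall i : nat, i.+1 < t -> #|edges_between e f i| = 4)].
Proof.
have [Hsym Hirr] := Hsimple.
case: (posnP t) => [t0|tpos].
- have Inone : 'I_t -> False by case=> i; rewrite t0.
  have n0 : n = 0 by rewrite -Hsum big_pred0 // => i; case: (Inone i).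
  have Tnone : T -> False.
    move=> x; have := card0_eq (etrans HT n0) x; by rewrite !inE.
  exists (fun x => match Tnone x with end); split.
  + by move=> i; case: (Inone i).
  + by move=> x; case: (Tnone x).
  + split.
      by apply/subsetP => A; rewrite inE => /existsP [x _]; case: (Tnone x).
    by move=> A B; rewrite inE => /existsP [x _]; case: (Tnone x).
  + by move=> i; rewrite t0.
have n50 : 50 <= n.
  rewrite -Hsum (bigD1 (Ordinal tpos)) //=; apply: leq_trans (Hns _) (leq_addr _ _).
have [x0 _] : exists x0 : T, true.
  have : 0 < #|T| by rewrite HT; apply: leq_trans n50.
  by case/card_gt0P => x0 _; exists x0.
have [cs [Hcu Hcov Hg]] := decomp Hsym Hirr Hreg Hgirth.
set s := gseq x0 cs.
set os := offs cs.
have Hperm : perm_eq s (flatten cs) := gseq_perm x0 Hg.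
have Hsu : uniq s by rewrite (perm_uniq Hperm).
have Hscov : forall x, x \in s by move=> x; rewrite (perm_mem Hperm).
have Hsz : size s = n.
  rewrite -HT -(card_uniqP Hsu); apply: eq_card => x; by rewrite Hscov inE.
have HE : forall p q, p < q -> q < n -> e (nth x0 s p) (nth x0 s q) = gEdge os p q.
  by move=> p q pq qn; apply: (gE Hsym Hreg (x0:=x0) Hg Hcu pq); rewrite -/s Hsz.
have G : gapped os := offs_gap Hg.
have O0 : 0 \in os := offs0 cs.
have On : n \in os by rewrite -Hsz; exact: offs_last.
set m := t.-1.
pose nsn j := if (insub j : option 'I_t) is Some i then ns i else 0.
pose N k := \sum_(j < k.+1) nsn j.
have HN : forall k, N k.+1 = N k + nsn k.+1 by move=> k; rewrite /N big_ord_recr.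
have HN0 : N 0 = nsn 0 by rewrite /N big_ord1.
have HNm : N m = n.
  rewrite /N /m prednK // -Hsum; apply: eq_bigr => i _; by rewrite /nsn valK.
have Hns' : forall i, i <= m -> 50 <= nsn i.
  move=> i im; rewrite /nsn; case: insubP => [j _ _|]; first exact: Hns.
  by rewrite /m in im; rewrite -(prednK tpos) ltnS im.
have [u Hu] := choose_u m n N G.
have Hu1 : forall k, k < m -> if k is k'.+1 then (u k' + 20 <= u k) && (u k <= u k' + 30)
                     else (20 <= u 0) && (u 0 <= 30).
  move=> k km; have [h _ _] := Hu k km; move: h; by case: k km.
have [H Hdn Hcnt] := build_ok HN HN0 HNm Hns' Hu1.
set d := fun k => u k + (n - N k).
have S : setup e x0 s n os m u d.
  constructor => //.
  - move=> B /hasP [k]; rewrite mem_iota add0n => km /orP [] /eqP ->; by case: (Hu k km).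
  - move=> B /hasP [k]; rewrite mem_iota add0n => km /orP [] /eqP ->.
    + case: H => _ _ HX _ HB; have := HX k k km km; have := HB k km; rewrite /d; lia.
    + case: H => _ _ _ _ HB; have := HB k km; rewrite /d; lia.
have lab_lt : forall p, label m u d p < t.
  by move=> p; apply: leq_ltn_trans (label_le _ _ _ _) _; rewrite /m prednK.
exists (fun x => Ordinal (lab_lt (index x s))).
have Hf : forall x, val (Ordinal (lab_lt (index x s))) = label m u d (index x s) by [].
split.
- move=> i.
  rewrite (@card_count _ s _ Hsu Hscov).
  rewrite (eq_count (a2 := fun x => label m u d (index x s) == i)); last first.
    by move=> x /=; rewrite -(inj_eq val_inj).
  have E1 : s = map (nth x0 s) (iota 0 n).
    by rewrite -Hsz -/(mkseq (nth x0 s) (size s)) mkseq_nth.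
  rewrite [X in count _ X]E1 count_map.
  have -> : count (preim (nth x0 s) (fun x => label m u d (index x s) == i)) (iota 0 n)
          = count (fun p => label m u d p == i) (iota 0 n).
    apply: eq_in_count => p; rewrite mem_iota add0n => pn /=.
    by rewrite (idx_nth S).
  have im : (i : nat) <= m by rewrite /m -ltnS prednK.
  rewrite (label_count H im Hdn) Hcnt // /nsn.
  by rewrite valK.
- by move=> x y exy; have := prop2 S exy.
- exact: prop3 S Hf.
- move=> i it; apply: (prop4 S Hf).
  by rewrite /m -ltnS prednK.
Qed.
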